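(* Let $\mathbb{K}$ be a field of characteristic $0$ and let $V,V'$ be $\mathbb{K}$-vector spaces of dimensions $n,m$ with $n,m\ge d$. For every homogeneous polynomial functor $\mathcal{P}_d$ of degree $d$, the functors $\Omega_{V,d}(\mathcal{P}_d)$ and $\Omega_{V',d}(\mathcal{P}_d)$ are naturally equivalent.
   Context: For a homogeneous polynomial functor $P$ of degree $d$ on the category of finite-dimensional $\mathbb{K}$-spaces and a space $V$ with $\dim V\ge d$, $\Omega_{V,d}(P)(W)=\operatorname{Hom}_{\mathrm{GL}(V)}\bigl(\bigwedge^dV,P(W\otimes V)\bigr)$, where $\mathrm{GL}(V)$ acts on $W\otimes V$ via the factor $V$, and a linear map $h:W\to W'$ acts by post-composition with $P(h\otimes\mathrm{id}_V)$. *)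

(* Defs.v *)
From HB Require Import structures.
From mathcomp Require Import all_boot all_order all_algebra.
From mathcomp Require Import mpoly.
From mathcomp Require Import mxtens.
Set Implicit Arguments. Unset Strict Implicit. Unset Printing Implicit Defensive.
Import Order.TTheory GRing.Theory Num.Theory.
Local Open Scope ring_scope.

(* Finite-dimensional K-spaces are represented by the skeleton K^n (row
   vectors 'rV[K]_n); a linear map K^m -> K^n is a matrix A : 'M_(m,n)
   acting by v |-> v *m A, so "first A, then B" is A *m B. *)

Record polyFunctor (K : fieldType) (d : nat) := PolyFunctor {
  pf_obj : nat -> nat;
  pf_mor : forall m n, 'M[K]_(m, n) -> 'M[K]_(pf_obj m, pf_obj n);
  pf_id : forall n, pf_mor (1%:M : 'M[K]_n) = 1%:M;
  pf_comp : forall m n p (A : 'M[K]_(m, n)) (B : 'M[K]_(n, p)),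
      pf_mor (A *m B) = pf_mor A *m pf_mor B;
  pf_poly : forall m n, exists F : 'I_(pf_obj m) -> 'I_(pf_obj n) -> {mpoly K[m * n]},
      (forall i j, F i j \is d.-homog) /\
      (forall (A : 'M[K]_(m, n)) i j, pf_mor A i j = (F i j).@[fun k => mxvec A 0 k])
}.

(* d-element subsets of 'I_n : the standard basis e_S of /\^d K^n. *)
Definition dsub (n d : nat) := {S : {set 'I_n} | #|S| == d}.

(* This is the (S,T) entry of the
   matrix of /\^d g in the basis (e_S):  g e_S = \sum_T minor g S T e_T. *)
Definition minor (K : fieldType) (n d : nat) (g : 'M[K]_n) (S T : dsub n d) : K :=
  let rows := [seq [seq g s t | t <- enum (val T)] | s <- enum (val S)] in
  \det (\matrix_(i < d, j < d) nth 0 (nth [::] rows i) j).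

(* Ambient space of linear maps /\^d K^n -> P(K^w (x) K^n), given by the
   images of the basis vectors e_S. *)
Definition OmegaAmb (K : fieldType) (d : nat) (P : polyFunctor K d) (n w : nat) :=
  {ffun dsub n d -> 'rV[K]_(pf_obj P (w * n))}.

(* Omega_{K^n,d}(P)(K^w) = Hom_{GL(K^n)}(/\^d K^n, P(K^w (x) K^n)),
   GL acting on K^w (x) K^n via 1 (x) g. *)
Definition inOmega (K : fieldType) (d : nat) (P : polyFunctor K d) (n w : nat)
    (f : OmegaAmb P n w) : Prop :=
  forall g : 'M[K]_n, g \in unitmx -> forall S : dsub n d,
    \sum_(T : dsub n d) minor g S T *: f T
    = f S *m pf_mor P ((1%:M : 'M[K]_w) *t g).

Definition OmegaMap (K : fieldType) (d : nat) (P : polyFunctor K d) (n w w' : nat)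
    (h : 'M[K]_(w, w')) (f : OmegaAmb P n w) : OmegaAmb P n w' :=
  [ffun S => f S *m pf_mor P (h *t (1%:M : 'M[K]_n))].

(* Main.v *)
Require Import Defs.
From HB Require Import structures.
From mathcomp Require Import all_boot all_order all_algebra.
From mathcomp Require Import mpoly mxtens.
Import GRing.Theory.
Local Open Scope ring_scope.
From mathcomp Require Import fingroup perm zify.
Set Implicit Arguments. Unset Strict Implicit. Unset Printing Implicit Defensive.

Section PF.
Variable K : fieldType.
Hypothesis charK0 : [pchar K] =i pred0.

Definition pfun (F : K -> K) := exists p : {poly K}, forall t, F t = p.[t].

Lemma pfunC c : pfun (fun _ => c).
Proof. by exists c%:P => t; rewrite hornerC. Qed.
Lemma pfunX : pfun (fun t => t).
Proof. by exists 'X => t; rewrite hornerX. Qed.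
Lemma pfunD F G : pfun F -> pfun G -> pfun (fun t => F t + G t).
Proof. by move=> [p Hp] [q Hq]; exists (p + q) => t; rewrite hornerD Hp Hq. Qed.
Lemma pfunM F G : pfun F -> pfun G -> pfun (fun t => F t * G t).
Proof. by move=> [p Hp] [q Hq]; exists (p * q) => t; rewrite hornerM Hp Hq. Qed.
Lemma pfunN F : pfun F -> pfun (fun t => - F t).
Proof. by move=> [p Hp]; exists (- p) => t; rewrite hornerN Hp. Qed.
Lemma pfunB F G : pfun F -> pfun G -> pfun (fun t => F t - G t).
Proof. by move=> hF hG; apply: pfunD => //; apply: pfunN. Qed.
Lemma pfun_ext F G : pfun F -> (forall t, F t = G t) -> pfun G.
Proof. by move=> [p Hp] E; exists p => t; rewrite -E. Qed.
Lemma pfun_sum (I : Type) (r : seq I) (P : pred I) (F : I -> K -> K) :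
  (forall i, P i -> pfun (F i)) -> pfun (fun t => \sum_(i <- r | P i) F i t).
Proof.
move=> H; elim: r => [|a r IH].
  by apply: (pfun_ext (pfunC 0)) => t; rewrite big_nil.
case Pa: (P a).
  by apply: (pfun_ext (pfunD (H a Pa) IH)) => t; rewrite big_cons Pa.
by apply: (pfun_ext IH) => t; rewrite big_cons Pa.
Qed.
Lemma pfun_prod (I : Type) (r : seq I) (P : pred I) (F : I -> K -> K) :
  (forall i, P i -> pfun (F i)) -> pfun (fun t => \prod_(i <- r | P i) F i t).
Proof.
move=> H; elim: r => [|a r IH].
  by apply: (pfun_ext (pfunC 1)) => t; rewrite big_nil.
case Pa: (P a).
  by apply: (pfun_ext (pfunM (H a Pa) IH)) => t; rewrite big_cons Pa.
by apply: (pfun_ext IH) => t; rewrite big_cons Pa.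
Qed.
Lemma pfunXn F k : pfun F -> pfun (fun t => F t ^+ k).
Proof. by move=> [p Hp]; exists (p ^+ k) => t; rewrite horner_exp Hp. Qed.

Lemma pfun_meval k (p : {mpoly K[k]}) (v : K -> 'I_k -> K) :
  (forall i, pfun (fun t => v t i)) -> pfun (fun t => p.@[v t]).
Proof.
move=> H; apply: (@pfun_ext (fun t => \sum_(m <- msupp p) p@_m * \prod_i v t i ^+ m i)).
  apply: pfun_sum => m _; apply: pfunM; first exact: pfunC.
  by apply: pfun_prod => i _; apply: pfunXn.
by move=> t; rewrite mevalE.
Qed.

Definition pfm a b (M : K -> 'M[K]_(a, b)) := forall i j, pfun (fun t => M t i j).

Lemma pfm_const a b (A : 'M[K]_(a,b)) : pfm (fun _ => A).
Proof. by move=> i j; apply: pfunC. Qed.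
Lemma pfm_lin a b (A B : 'M[K]_(a,b)) : pfm (fun t => A + t *: B).
Proof. by move=> i j; apply: (@pfun_ext (fun t => A i j + t * B i j)) => [|t]; rewrite ?mxE //;
  apply: pfunD; [apply: pfunC | apply: pfunM; [apply: pfunX|apply: pfunC]]. Qed.
Lemma pfm_mul a b c (M : K -> 'M[K]_(a,b)) (N : K -> 'M[K]_(b,c)) :
  pfm M -> pfm N -> pfm (fun t => M t *m N t).
Proof.
move=> hM hN i j; apply: (@pfun_ext (fun t => \sum_l M t i l * N t l j)) => [|t]; last by rewrite mxE.
by apply: pfun_sum => l _; apply: pfunM.
Qed.
Lemma pfm_tens a b c e (A : 'M[K]_(a,b)) (M : K -> 'M[K]_(c,e)) :
  pfm M -> pfm (fun t => A *t M t).
Proof.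
move=> hM i j; apply: (@pfun_ext (fun t => A (mxtens_unindex i).1 (mxtens_unindex j).1
                 * M t (mxtens_unindex i).2 (mxtens_unindex j).2)) => [|t]; last by rewrite mxE.
by apply: pfunM; [apply: pfunC|apply: hM].
Qed.
Lemma pfm_P d (P : polyFunctor K d) a b (M : K -> 'M[K]_(a,b)) :
  pfm M -> pfm (fun t => pf_mor P (M t)).
Proof.
move=> hM i j; have [F [_ HF]] := pf_poly P a b.
apply: (@pfun_ext (fun t => (F i j).@[fun k => mxvec (M t) 0 k])) => [|t]; last by rewrite HF.
apply: pfun_meval => k; case/mxvec_indexP: k => i' j'.
by apply: (@pfun_ext (fun t => M t i' j')) => // t; rewrite mxvecE.
Qed.
Lemma pfm_det a (M : K -> 'M[K]_a) : pfm M -> pfun (fun t => \det (M t)).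
Proof.
move=> hM; apply: (@pfun_ext (fun t => \sum_(s : {perm 'I_a}) (-1) ^+ s * \prod_i M t i (s i))).
  apply: pfun_sum => s _; apply: pfunM; first exact: pfunC.
  by apply: pfun_prod => i _; apply: hM.
by move=> t; rewrite /determinant.
Qed.

Lemma poly_fun0 (p : {poly K}) : (forall t, p.[t] = 0) -> p = 0.
Proof.
move=> H; apply: (@roots_geq_poly_eq0 _ p [seq i%:R | i <- iota 0 (size p)]).
- by apply/allP => x /mapP [i _ ->]; rewrite /root H.
- rewrite map_inj_in_uniq ?iota_uniq // => i j _ _ /eqP.
  have hc := (pcharf0P K).1 charK0.
  wlog le_ij : i j / (i <= j)%N => [W|].
    by case: (leqP i j) => [/W//|/ltnW /W W' E]; symmetry; apply: W'; rewrite eq_sym.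
  rewrite eq_sym -subr_eq0 -natrB // hc subn_eq0 => le_ji; apply/eqP; rewrite eqn_leq le_ij le_ji.
  by [].
- by rewrite size_map size_iota.
Qed.

End PF.


Section L.
Variable K : fieldType.
Hypothesis charK0 : [pchar K] =i pred0.

Lemma poly_fun0' (p : {poly K}) : (forall t, t != 0 -> p.[t] = 0) -> p = 0.
Proof.
move=> H; have: p * 'X = 0.
  apply: (poly_fun0 charK0) => t; rewrite hornerM hornerX.
  by have [->|/H->] := eqVneq t 0; rewrite ?mulr0 ?mul0r.
by move/eqP; rewrite mulf_eq0 polyX_eq0 orbF => /eqP.
Qed.

Lemma laurent (Hp Kp : {poly K}) :
  (forall s, s != 0 -> Kp.[s] = s * Hp.[s^-1]) -> Hp.[1] = Hp.[0] + Kp.[0].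
Proof.
move=> H; have [N [sN N2]] : exists N, (size Hp < N)%N /\ (2 <= N)%N by exists (size Hp).+2.
pose R := \sum_(k < N) Hp`_k *: 'X^(N - k).
have E : 'X^N * Kp = 'X * R.
  apply/eqP; rewrite -subr_eq0; apply/eqP/poly_fun0' => s s0.
  rewrite hornerD hornerN !hornerM hornerXn hornerX H //.
  rewrite (horner_coef_wide _ (ltnW sN)) /R horner_sum mulrCA mulr_sumr.
  apply/eqP; rewrite subr_eq0; apply/eqP; congr (_ * _); apply: eq_bigr => k _.
  rewrite hornerZ hornerXn exprVn mulrCA exprB ?unitfE //; last exact: ltnW.
have coefR j (jN : (j < N)%N) : R`_(N - j) = Hp`_j.
  rewrite /R coef_sum (bigD1 (Ordinal jN)) //= coefZ coefXn eqxx mulr1 big1 ?addr0 //.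
  move=> k /eqP kj; rewrite coefZ coefXn.
  have -> : (N - j == N - k)%N = false.
    apply/negbTE/eqP => e; apply: kj; apply: val_inj => /=.
    have := ltn_ord k; lia.
  by rewrite mulr0.
have hk j : (2 <= j)%N -> Hp`_j = 0.
  move=> j2; have [jN|Nj] := ltnP j N; last first.
    by rewrite nth_default // (leq_trans (ltnW sN)).
  have := congr1 (fun p : {poly K} => p`_(N - j).+1) E.
  rewrite /= coefXnM coefXM /= coefR //.
  by have -> : ((N - j).+1 < N)%N by lia.
have h1 : Kp`_0 = Hp`_1.
  have := congr1 (fun p : {poly K} => p`_N) E.
  rewrite /= coefXnM coefXM ltnn subnn.
  have -> : (N == 0)%N = false by lia.
  by rewrite -subn1 coefR //; lia.
have EH : Hp = (Hp`_0)%:P + Hp`_1 *: 'X.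
  apply/polyP => k; rewrite coefD coefC coefZ coefX.
  case: k => [|[|k]] /=; rewrite ?mulr1 ?mulr0 ?addr0 ?add0r //.
  by rewrite hk.
rewrite [Kp.[0]]horner_coef0 h1 {1}EH !hornerE /=.
by rewrite horner_coef0.
Qed.

Lemma hom_add m N (psi : 'rV[K]_m -> 'rV[K]_N) :
  (forall u v l, pfun (fun t => psi (u + t *: v) 0 l)) ->
  (forall a u, psi (a *: u) = a *: psi u) ->
  forall u v, psi (u + v) = psi u + psi v.
Proof.
move=> hP hH u v; apply/rowP => l; rewrite mxE.
have [Hp eH] := hP u v l; have [Kp eK] := hP v u l.
have := @laurent Hp Kp; rewrite -!eH -!eK !scale0r !addr0 scale1r => -> //.
move=> s s0; rewrite -eH -eK.
have -> : v + s *: u = s *: (u + s^-1 *: v).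
  by rewrite scalerDr scalerA mulfV // scale1r addrC.
by rewrite hH mxE.
Qed.

Lemma lin_zero m (V : zmodType) (G : 'rV[K]_m -> V) :
  (forall u v, G (u + v) = G u + G v) ->
  (forall j a, G (a *: delta_mx 0 j) = 0) -> forall u, G u = 0.
Proof.
move=> hA hD u; rewrite (row_sum_delta u).
have G0 : G 0 = 0.
  by apply/eqP; rewrite -(addrI (G 0) (_ : G 0 + G 0 = G 0 + 0)) // addr0 -hA addr0.
elim/big_ind: _ => //; by move=> x y hx hy; rewrite hA hx hy addr0.
Qed.
End L.


Section Comb.
Variables (K : fieldType) (n d : nat).
Hypothesis hdn : (d <= n)%N.

Definition sv (S : dsub n d) (i : 'I_d) : 'I_n := nth (widen_ord hdn i) (enum (val S)) i.

Lemma size_enumS (S : dsub n d) : size (enum (val S)) = d.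
Proof. by rewrite -cardE; apply/eqP; exact: (valP S). Qed.

Lemma sv_nth (S : dsub n d) (i : 'I_d) x0 : sv S i = nth x0 (enum (val S)) i.
Proof. by apply: set_nth_default; rewrite size_enumS. Qed.

Lemma sv_mem (S : dsub n d) i : sv S i \in val S.
Proof. by rewrite -mem_enum /sv mem_nth // size_enumS. Qed.

Lemma sv_inj (S : dsub n d) : injective (sv S).
Proof.
move=> i j; rewrite (sv_nth S j (widen_ord hdn i)) /sv => /eqP.
rewrite nth_uniq ?size_enumS ?enum_uniq // => /eqP; exact: val_inj.
Qed.

Lemma sv_surj (S : dsub n d) x : x \in val S -> exists i, sv S i = x.
Proof.
rewrite -mem_enum => xS; have ix : (index x (enum (val S)) < d)%N.
  by rewrite -[X in (_ < X)%N](size_enumS S) index_mem.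
by exists (Ordinal ix); rewrite /sv nth_index.
Qed.

Lemma minorE (g : 'M[K]_n) (S T : dsub n d) :
  minor g S T = \det (\matrix_(i, j) g (sv S i) (sv T j)).
Proof.
rewrite /minor; congr (\det _); apply/matrixP => i j; rewrite !mxE.
by rewrite (nth_map (widen_ord hdn i)) ?size_enumS // (nth_map (widen_ord hdn j)) ?size_enumS.
Qed.

Lemma enum_Sd : [seq val i | i <- enum [set i : 'I_n | (i < d)%N]] = iota 0 d.
Proof.
rewrite -(filter_iota_ltn 0 hdn) -val_enum_ord filter_map.
congr (map _ _); rewrite enumT /enum_mem.
by apply: eq_filter => x; rewrite !inE.
Qed.

Lemma card_Sd : #|[set i : 'I_n | (i < d)%N]| == d.
Proof. by rewrite cardE -(size_map val) enum_Sd size_iota. Qed.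

Definition Sd : dsub n d := exist (fun S : {set 'I_n} => #|S| == d) _ card_Sd.

Lemma sv_Sd (i : 'I_d) : val (sv Sd i) = val i.
Proof.
rewrite /sv -(nth_map _ 0); last by rewrite size_enumS.
by rewrite enum_Sd nth_iota.
Qed.

Lemma in_Sd (x : 'I_n) : (x \in val Sd) = (x < d)%N.
Proof. by rewrite inE. Qed.

Lemma dsub_notin (U V : dsub n d) : U != V -> exists2 u, u \in val U & u \notin val V.
Proof.
move=> UV; apply/exists_inP; rewrite -negb_forall_in; apply: contra UV => /forall_inP H.
apply/eqP/val_inj/eqP; rewrite eqEcard; apply/andP; split.
  by apply/subsetP => x /H.
by rewrite (eqP (valP U)) (eqP (valP V)).
Qed.
End Comb.

Lemma det_zero_col (K : fieldType) k (A : 'M[K]_k) j : (forall i, A i j = 0) -> \det A = 0.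
Proof. by move=> H; rewrite (expand_det_col _ j) big1 // => i _; rewrite H mul0r. Qed.

Lemma extend_set m d (hm : (d <= m)%N) (A : {set 'I_m}) :
  (#|A| <= d)%N -> exists U0 : dsub m d, A \subset val U0.
Proof.
move=> hA; have [e he] : exists e, (#|A| + e)%N = d by exists (d - #|A|)%N; lia.
elim: e A he {hA} => [|e IH] A he.
  have cA : #|A| == d by rewrite -he addn0.
  by exists (exist (fun S : {set 'I_m} => #|S| == d) A cA).
have : (0 < #|~: A|)%N by rewrite cardsCs setCK card_ord; lia.
case/card_gt0P => y; rewrite inE => yA.
have hc : (#|y |: A| + e)%N = d by rewrite cardsU1 yA; lia.
have [U0 hU0] := IH (y |: A) hc.
by exists U0; apply: subset_trans hU0; apply: subsetUr.
Qed.


Section Main.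
Variables (K : fieldType) (d : nat) (P : polyFunctor K d).
Hypothesis charK0 : [pchar K] =i pred0.

Lemma det_char (k : nat) (g : 'M[K]_k) t : \det (g + t *: 1%:M) = (char_poly (- g)).[t].
Proof.
have E := det_map_mx (horner_eval t) (char_poly_mx (- g)).
rewrite /char_poly; transitivity (horner_eval t (\det (char_poly_mx (- g)))); last by [].
rewrite -E; congr (\det _).

apply/matrixP => i j; rewrite !mxE.
change (g i j + t * (i == j)%:R = ('X *+ (i == j) - (- g i j)%:P).[t]).
rewrite hornerD hornerN hornerC hornerMn hornerX.
by rewrite opprK addrC mulr_natr.
Qed.

Lemma ext_equiv (k w : nat) (hk : (d <= k)%N) (f : OmegaAmb P k w) :
  inOmega f -> forall (g : 'M[K]_k) S,
  \sum_T minor g S T *: f T = f S *m pf_mor P ((1%:M : 'M[K]_w) *t g).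
Proof.
move=> hf g S.
pose F t := \sum_T minor (g + t *: 1%:M) S T *: f T - f S *m pf_mor P ((1%:M : 'M[K]_w) *t (g + t *: 1%:M)).
suff: F 0 = 0 by rewrite /F scale0r addr0 => /eqP; rewrite subr_eq0 => /eqP.
apply/rowP => l; rewrite [RHS]mxE.
have hpf : pfun (fun t => F t 0 l).
  apply: (@pfun_ext _ (fun t => \sum_T minor (g + t *: 1%:M) S T * f T 0 l
     - \sum_j f S 0 j * pf_mor P ((1%:M : 'M[K]_w) *t (g + t *: 1%:M)) j l)); last first.
    by move=> t; rewrite /F !mxE summxE; congr (_ - _); apply: eq_bigr => T _; rewrite mxE.
  apply: pfunB; last first.
    apply: pfun_sum => j _; apply: pfunM; first exact: pfunC.
    exact: (pfm_P (pfm_tens (1%:M : 'M[K]_w) (pfm_lin g 1%:M)) j l).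
  apply: pfun_sum => T _; apply: pfunM; last exact: pfunC.
  apply: (@pfun_ext _ (fun t => \det (\matrix_(i, j) (g + t *: 1%:M) (sv hk S i) (sv hk T j)))).
    apply: pfm_det => i j.
    apply: (@pfun_ext _ (fun t => g (sv hk S i) (sv hk T j) + t * (1%:M : 'M[K]_k) (sv hk S i) (sv hk T j))).
      by apply: pfunD; [apply: pfunC|apply: pfunM; [apply: pfunX|apply: pfunC]].
    by move=> t; rewrite !mxE.
  by move=> t; rewrite minorE.
have [q hq] := hpf.
set D := char_poly (- g).
have D0 : D != 0 by apply: monic_neq0; apply: char_poly_monic.
have qD : q * D = 0.
  apply: (poly_fun0 charK0) => t; rewrite hornerM.
  have [Dt0|Dt0] := eqVneq D.[t] 0; first by rewrite Dt0 mulr0.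
  rewrite -hq /F.
  have -> : \sum_T minor (g + t *: 1%:M) S T *: f T = f S *m pf_mor P ((1%:M : 'M[K]_w) *t (g + t *: 1%:M)).
    by apply: hf; rewrite unitmxE unitfE det_char.
  by rewrite subrr mxE mul0r.
have q0 : q = 0 by move/eqP: qD; rewrite mulf_eq0 (negbTE D0) orbF => /eqP.
by rewrite hq q0 horner0.
Qed.

Definition Lm k : 'M[K]_(k, d) := \matrix_(i, j) (val i == val j)%:R.
Definition Lt k : 'M[K]_(d, k) := \matrix_(i, j) (val i == val j)%:R.
Definition Rs k (hk : (d <= k)%N) (U : dsub k d) : 'M[K]_(d, k) :=
  \matrix_(i, j) (j == sv hk U i)%:R.

Lemma LmE1 k b (M : 'M[K]_(d, b)) (a : 'I_k) (i : 'I_d) c :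
  val a = val i -> (Lm k *m M) a c = M i c.
Proof.
move=> ai; rewrite mxE (bigD1 i) //= mxE ai eqxx mul1r big1 ?addr0 // => l /negPf li.
by rewrite mxE ai (_ : (val i == val l) = false) ?mul0r // -[_ == _]/(i == l) eq_sym li.
Qed.

Lemma LmE0 k b (M : 'M[K]_(d, b)) (a : 'I_k) c : (d <= a)%N -> (Lm k *m M) a c = 0.
Proof.
move=> da; rewrite mxE big1 // => l _; rewrite mxE.
have -> : (val a == val l) = false by apply/negbTE/eqP => /= e; have := ltn_ord l; lia.
by rewrite mul0r.
Qed.

Lemma LtE1 k b (M : 'M[K]_(b, d)) (a : 'I_k) (i : 'I_d) c :
  val a = val i -> (M *m Lt k) c a = M c i.
Proof.
move=> ai; rewrite mxE (bigD1 i) //= mxE ai eqxx mulr1 big1 ?addr0 // => l /negPf li.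
by rewrite mxE ai (_ : (val l == val i) = false) ?mulr0 // -[_ == _]/(l == i) li.
Qed.

Lemma LtE0 k b (M : 'M[K]_(b, d)) (a : 'I_k) c : (d <= a)%N -> (M *m Lt k) c a = 0.
Proof.
move=> da; rewrite mxE big1 // => l _; rewrite mxE.
have -> : (val l == val a) = false by apply/negbTE/eqP => /= e; have := ltn_ord l; lia.
by rewrite mulr0.
Qed.

Lemma LtLm k (hk : (d <= k)%N) : Lt k *m Lm k = 1%:M.
Proof.
apply/matrixP => i j; rewrite mxE (bigD1 (widen_ord hk i)) //= !mxE eqxx mul1r.
rewrite big1 ?addr0 // => l li; rewrite !mxE.
have -> : (val i == val l) = false; last by rewrite mul0r.
by apply/negbTE; apply: contra li => /eqP e; apply/eqP/val_inj.
Qed.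

Lemma RsE k (hk : (d <= k)%N) (U : dsub k d) b (M : 'M[K]_(k, b)) i c :
  (Rs hk U *m M) i c = M (sv hk U i) c.
Proof.
rewrite mxE (bigD1 (sv hk U i)) //= mxE eqxx mul1r big1 ?addr0 // => l /negPf li.
by rewrite mxE li mul0r.
Qed.

Lemma minor_sel k (hk : (d <= k)%N) (S T : dsub k d) :
  \det (\matrix_(i, j) ((sv hk T j == sv hk S i)%:R : K)) = (T == S)%:R.
Proof.
have [->|TS] := eqVneq T S.
  rewrite (_ : (true%:R : K) = \det (1%:M : 'M[K]_d)); last by rewrite det1.
  congr (\det _); apply/matrixP => i j; rewrite !mxE.
  by rewrite (inj_eq (@sv_inj _ _ hk S)) eq_sym.
have [u uT uS] := dsub_notin TS; have [j0 hj0] := sv_surj hk uT.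
apply: (det_zero_col (j := j0)) => i; rewrite mxE hj0.
by have -> : (u == sv hk S i) = false by apply: contraNF uS => /eqP ->; apply: sv_mem.
Qed.

Lemma minor_LR k (hk : (d <= k)%N) (S T : dsub k d) :
  minor (Lm k *m Rs hk S) (Sd hk) T = (T == S)%:R.
Proof.
rewrite (minorE hk) -minor_sel; congr (\det _); apply/matrixP => i j; rewrite mxE [in RHS]mxE.
by rewrite (@LmE1 _ _ _ _ i) ?sv_Sd // mxE.
Qed.

Lemma f_from_Sd k w (hk : (d <= k)%N) (f : OmegaAmb P k w) : inOmega f ->
  forall S, f S = f (Sd hk) *m pf_mor P ((1%:M : 'M[K]_w) *t (Lm k *m Rs hk S)).
Proof.
move=> hf S; rewrite -(ext_equiv hk hf) (bigD1 S) //= minor_LR eqxx scale1r big1 ?addr0 //.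
by move=> T /negPf TS; rewrite minor_LR TS scale0r.
Qed.

Definition eta n m (hn : (d <= n)%N) (hm : (d <= m)%N) w (f : OmegaAmb P n w) : OmegaAmb P m w :=
  [ffun U => f (Sd hn) *m pf_mor P ((1%:M : 'M[K]_w) *t (Lm n *m Rs hm U))].

Lemma Pcomp1 w a b c (A : 'M[K]_(a, b)) (B : 'M[K]_(b, c)) :
  pf_mor P ((1%:M : 'M[K]_w) *t A) *m pf_mor P ((1%:M : 'M[K]_w) *t B)
  = pf_mor P ((1%:M : 'M[K]_w) *t (A *m B)).
Proof. by rewrite -pf_comp tensmx_mul mulmx1. Qed.

Lemma RsLm k (hk : (d <= k)%N) : Rs hk (Sd hk) *m Lm k = 1%:M.
Proof.
by apply/matrixP => i j; rewrite RsE !mxE sv_Sd.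
Qed.

Lemma eta_inv n m (hn : (d <= n)%N) (hm : (d <= m)%N) w (f : OmegaAmb P n w) :
  inOmega f -> eta hm hn (eta hn hm f) = f.
Proof.
move=> hf; apply/ffunP => S; rewrite !ffunE -mulmxA Pcomp1.
by rewrite mulmxA -[Lm n *m _ *m _]mulmxA RsLm mulmx1 -f_from_Sd.
Qed.

Lemma eta_nat n m (hn : (d <= n)%N) (hm : (d <= m)%N) w w' (h : 'M[K]_(w, w'))
  (x : OmegaAmb P n w) : eta hn hm (OmegaMap h x) = OmegaMap h (eta hn hm x).
Proof.
apply/ffunP => U; rewrite !ffunE -!mulmxA -!pf_comp !tensmx_mul.
by rewrite !mulmx1 !mul1mx.
Qed.

Lemma eta_lin n m (hn : (d <= n)%N) (hm : (d <= m)%N) w a (x y : OmegaAmb P n w) :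
  eta hn hm (a *: x + y) = a *: eta hn hm x + eta hn hm y.
Proof. by apply/ffunP => U; rewrite !ffunE mulmxDl scalemxAl. Qed.
End Main.


Section ThmA.
Variables (K : fieldType) (d : nat) (P : polyFunctor K d).
Hypothesis charK0 : [pchar K] =i pred0.
Variables (n m w : nat) (hn : (d <= n)%N) (hm : (d <= m)%N) (f : OmegaAmb P n w).
Hypothesis hf : inOmega f.

Definition x0 := f (Sd hn).
Definition phi (r : 'M[K]_(d, m)) := x0 *m pf_mor P ((1%:M : 'M[K]_w) *t (Lm K d n *m r)).
Definition Dfun (r : 'M[K]_(d, m)) :=
  \sum_U \det (\matrix_(i, j) r i (sv hm U j)) *: phi (Rs K hm U).
Definition upd (r : 'M[K]_(d, m)) (k : 'I_d) (v : 'rV[K]_m) : 'M[K]_(d, m) :=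
  \matrix_(i, j) (if i == k then v 0 j else r i j).

Lemma phiZ r k a v : phi (upd r k (a *: v)) = a *: phi (upd r k v).
Proof.
pose Dg := diag_mx (\row_(i < n) (if val i == val k then a else 1)).
have E1 : Lm K d n *m upd r k (a *: v) = Dg *m (Lm K d n *m upd r k v).
  rewrite mul_diag_mx; apply/matrixP => b c; rewrite [RHS]mxE [X in X * _]mxE.
  have [bd|db] := ltnP b d; last by rewrite !LmE0 ?mulr0.
  rewrite !(@LmE1 _ _ _ _ _ _ (Ordinal bd)) // !mxE.
  case: eqP => [e|ne]; first by rewrite -e eqxx.
  have -> : (val b == val k) = false by apply/negP => /eqP e; apply: ne; apply: val_inj.
  by rewrite mul1r.
have E2 : x0 *m pf_mor P ((1%:M : 'M[K]_w) *t Dg) = a *: x0.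
  rewrite /x0 -(ext_equiv charK0 hn hf) (bigD1 (Sd hn)) //= big1 ?addr0.
    congr (_ *: _); rewrite (minorE hn).
    have -> : \matrix_(i, j) Dg (sv hn (Sd hn) i) (sv hn (Sd hn) j)
            = diag_mx (\row_(i < d) (if i == k then a else 1)).
      apply/matrixP => i j; rewrite !mxE (inj_eq (@sv_inj _ _ hn _)) !sv_Sd.
      by [].
    rewrite det_diag (bigD1 k) //= mxE eqxx big1 ?mulr1 // => i /negPf ik.
    by rewrite mxE ik.
  move=> T /eqP TS; have [u uT uS] := dsub_notin (introN eqP TS).
  have [j0 hj0] := sv_surj hn uT.
  rewrite (minorE hn) (@det_zero_col _ _ _ j0) ?scale0r // => i; rewrite !mxE hj0.
  have -> : (sv hn (Sd hn) i == u) = false by apply: contraNF uS => /eqP <-; apply: sv_mem.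
  by rewrite mulr0n.
by rewrite /phi E1 -Pcomp1 mulmxA E2 -scalemxAl.
Qed.


Lemma upd_pfm r k (u v : 'rV[K]_m) : pfm (fun t => upd r k (u + t *: v)).
Proof.
move=> i j; case: (eqVneq i k) => [->|ne].
  apply: (pfun_ext (pfm_lin u v 0 j)) => t; by rewrite [RHS]mxE eqxx.
apply: (pfun_ext (pfunC (r i j))) => t; by rewrite mxE (negPf ne).
Qed.

Lemma phiD r k u v : phi (upd r k (u + v)) = phi (upd r k u) + phi (upd r k v).
Proof.
apply: (@hom_add _ charK0 _ _ (fun v => phi (upd r k v))) => [u' v' l|a u'].
  exact: (pfm_mul (pfm_const x0) (pfm_P (P:=P) (pfm_tens (1%:M : 'M[K]_w) (pfm_mul (pfm_const (Lm K d n)) (upd_pfm r k u' v')))) 0 l).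
exact: phiZ.
Qed.

Lemma Dlin r k a b u v :
  Dfun (upd r k (a *: u + b *: v)) = a *: Dfun (upd r k u) + b *: Dfun (upd r k v).
Proof.
rewrite /Dfun !scaler_sumr -big_split /=; apply: eq_bigr => U _.
rewrite !scalerA -scalerDl; congr (_ *: _).
apply: (@determinant_multilinear _ _ _ _ _ k a b).
- by apply/rowP => j; rewrite !mxE eqxx.
- by apply/matrixP => i j; rewrite !mxE eq_sym (negPf (neq_lift k i)).
- by apply/matrixP => i j; rewrite !mxE eq_sym (negPf (neq_lift k i)).
Qed.

Definition RJ (J : 'I_d -> 'I_m) : 'M[K]_(d, m) := \matrix_(i, j) (j == J i)%:R.

Lemma phi_base (J : 'I_d -> 'I_m) : phi (RJ J) = Dfun (RJ J).
Proof.
pose A := [set J i | i : 'I_d].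
have hA : (#|A| <= d)%N by rewrite -[X in (_ <= X)%N]card_ord leq_imset_card.
have [U0 hU0] := extend_set hm hA.
have hJ i : J i \in val U0 by apply: (subsetP hU0); apply: imset_f.
have [sg hsg] := @fin_all_exists _ (fun _ => 'I_d) (fun i s => sv hm U0 s = J i)
  (fun i => sv_surj hm (hJ i)).
pose Q : 'M[K]_d := \matrix_(i, l) (l == sg i)%:R.
have EQ : RJ J = Q *m Rs K hm U0.
  apply/matrixP => i b; rewrite [LHS]mxE [RHS]mxE (bigD1 (sg i)) //= !mxE eqxx mul1r.
  rewrite big1 ?addr0 ?hsg // => l /negPf lsg; by rewrite mxE lsg mul0r.
pose q : 'M[K]_n := Lm K d n *m Q *m Lt K d n.
have Eq : Lm K d n *m RJ J = q *m (Lm K d n *m Rs K hm U0).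
  by rewrite EQ /q -!mulmxA (mulmxA (Lt _ _ _)) LtLm // mul1mx.
have mq V : minor q (Sd hn) V = (V == Sd hn)%:R * \det Q.
  rewrite (minorE hn); have [->|VS] := eqVneq V (Sd hn).
    rewrite mul1r; congr (\det _); apply/matrixP => i j; rewrite [LHS]mxE /q.
    by rewrite (@LtE1 _ _ _ _ _ _ j) ?sv_Sd // (@LmE1 _ _ _ _ _ _ i) ?sv_Sd.
  rewrite mul0r; have [u uV uS] := dsub_notin VS; have [j0 hj0] := sv_surj hn uV.
  apply: (@det_zero_col _ _ _ j0) => i; rewrite mxE hj0 /q LtE0 //.
  by move: uS; rewrite in_Sd -leqNgt.
have Ephi : phi (RJ J) = \det Q *: phi (Rs K hm U0).
  rewrite /phi Eq -Pcomp1 mulmxA /x0 -(ext_equiv charK0 hn hf) (bigD1 (Sd hn)) //=.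
  rewrite big1 ?addr0; first by rewrite mq eqxx mul1r scalemxAl.
  by move=> V /negPf VS; rewrite mq VS mul0r scale0r.
rewrite Ephi /Dfun (bigD1 U0) //= big1 ?addr0.
  congr (_ *: _); congr (\det _); apply/matrixP => i j; rewrite !mxE -hsg.
  by rewrite (inj_eq (@sv_inj _ _ hm U0)).
move=> U UU0; have [u uU uU0] := dsub_notin UU0; have [j0 hj0] := sv_surj hm uU.
rewrite (@det_zero_col _ _ _ j0) ?scale0r // => i; rewrite !mxE hj0.
have -> : (u == J i) = false by apply: contraNF uU0 => /eqP ->.
by [].
Qed.

Lemma claim_ind k : (k <= d)%N -> forall (J : 'I_d -> 'I_m) r,
  (forall i : 'I_d, (k <= i)%N -> row i r = delta_mx 0 (J i)) -> phi r = Dfun r.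
Proof.
elim: k => [|k IH] hk J r hr.
  have -> : r = RJ J.
    apply/matrixP => i j; have := congr1 (fun M : 'rV[K]_m => M 0 j) (hr i isT).
    by rewrite !mxE /= => ->.
  exact: phi_base.
pose k' : 'I_d := Ordinal hk.
pose G v := phi (upd r k' v) - Dfun (upd r k' v).
have Gr : r = upd r k' (row k' r).
  by apply/matrixP => i j; rewrite !mxE; case: eqP => // ->.
suff: G (row k' r) = 0 by rewrite /G -Gr => /eqP; rewrite subr_eq0 => /eqP.
apply: (@lin_zero K) => [u v|j a].
  rewrite /G phiD; have := Dlin r k' 1 1 u v; rewrite !scale1r => ->.
  by rewrite opprD addrACA.
have Da : Dfun (upd r k' (a *: delta_mx 0 j)) = a *: Dfun (upd r k' (delta_mx 0 j)).
  have := Dlin r k' a 0 (delta_mx 0 j) (delta_mx 0 j).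
  by rewrite !scale0r !addr0.
rewrite /G phiZ Da -scalerBr.
have -> : phi (upd r k' (delta_mx 0 j)) = Dfun (upd r k' (delta_mx 0 j)); last by rewrite subrr scaler0.
apply: (IH (ltnW hk) (fun i => if i == k' then j else J i)) => i ki.
case: eqP => [->|ne].
  by apply/rowP => c; rewrite !mxE eqxx.
have ki' : (k < i)%N.
  rewrite ltn_neqAle ki andbT; apply/eqP => e; apply: ne; apply: val_inj; by rewrite /= e.
rewrite -(hr i ki'); apply/rowP => c; rewrite !mxE.
by have -> : (i == k') = false by apply/eqP.
Qed.

Lemma eta_in : inOmega (eta hn hm f).
Proof.
move=> g ug T.
have -> : eta hn hm f T *m pf_mor P ((1%:M : 'M[K]_w) *t g) = phi (Rs K hm T *m g).
  by rewrite ffunE -mulmxA Pcomp1 /phi mulmxA.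
rewrite (@claim_ind d (leqnn d) (fun i => widen_ord hm i)); last by move=> i; rewrite leqNgt ltn_ord.
rewrite /Dfun; apply: eq_bigr => U _; rewrite ffunE (minorE hm); congr (_ *: _).
by congr (\det _); apply/matrixP => i j; rewrite [LHS]mxE [RHS]mxE RsE.
Qed.
End ThmA.


Unset Implicit Arguments.

Theorem mainTheorem12 (K : fieldType) (charK0 : [pchar K] =i pred0)
    (d n m : nat) (hn : (d <= n)%N) (hm : (d <= m)%N) (P : polyFunctor K d) :
  exists eta : forall w : nat, OmegaAmb P n w -> OmegaAmb P m w,
    (forall w : nat,
       (forall (a : K) (x y : OmegaAmb P n w), eta w (a *: x + y) = a *: eta w x + eta w y)
       /\ (forall x, inOmega x -> inOmega (eta w x))
       /\ (forall x y, inOmega x -> inOmega y -> eta w x = eta w y -> x = y)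
       /\ (forall y, inOmega y -> exists2 x, inOmega x & eta w x = y))
    /\ (forall (w w' : nat) (h : 'M[K]_(w, w')) (x : OmegaAmb P n w),
          inOmega x -> eta w' (OmegaMap h x) = OmegaMap h (eta w x)).
Proof.
exists (fun w => @eta K d P n m hn hm w); split.
  move=> w; split; first exact: eta_lin.
  split; first by move=> x hx; exact: (eta_in charK0 hn hm hx).
  split.
    move=> x y hx hy e.
    by rewrite -(eta_inv charK0 hn hm hx) -(eta_inv charK0 hn hm hy) e.
  move=> y hy; exists (eta hm hn y); first exact: (eta_in charK0 hm hn hy).
  exact: (eta_inv charK0 hm hn hy).
by move=> w w' h x _; exact: eta_nat.
Qed.
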